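(* Let $n\ge2$ and let $L_1,\dots,L_n$ be closed line segments parallel to the $y$-axis, where $L_i$ has end-points $A_i(x_i,a_i)$ and $B_i(x_i,b_i)$ with $a_i\le b_i$ for all $i$, and $x_1<x_2<\dots<x_n$. Let $s<t$ be indices such that the slope of the line $A_sB_t$ is the minimum of the slopes of the lines $A_iB_j$ over all $1\le i<j\le n$, and let $u<v$ be indices such that the slope of the line $B_uA_v$ is the maximum of the slopes of the lines $B_iA_j$ over all $1\le i<j\le n$. Assume that at least one straight line intersects all the segments $L_1,\dots,L_n$. Then, among all straight lines intersecting all the segments $L_1,\dots,L_n$, the line $A_sB_t$ has the maximum slope and the line $B_uA_v$ has the minimum slope. *)

(* Defs.v *)
From mathcomp Require Import all_boot all_order all_algebra.
Set Implicit Arguments. Unset Strict Implicit. Unset Printing Implicit Defensive.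
Import Order.TTheory GRing.Theory Num.Theory.
Local Open Scope ring_scope.

Definition slope (R : realFieldType) (P Q : R * R) : R :=
  (Q.2 - P.2) / (Q.1 - P.1).

(* A non-vertical line y = m x + c is encoded by the pair (m, c); m is its
   slope.  The line through P and Q (P.1 <> Q.1): *)
Definition line_through (R : realFieldType) (P Q : R * R) : R * R :=
  (slope P Q, P.2 - slope P Q * P.1).

Definition meets_seg (R : realFieldType) (l : R * R) (x0 a0 b0 : R) : Prop :=
  a0 <= l.1 * x0 + l.2 <= b0.

Definition stabs_all (R : realFieldType) (n : nat) (x a b : 'I_n -> R)
  (l : R * R) : Prop :=
  forall i : 'I_n, meets_seg l (x i) (a i) (b i).

(* Main.v *)
Require Import Defs.
From mathcomp Require Import all_boot all_order all_algebra.
From mathcomp Require Import ring lra.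
Set Warnings "-all".
Import Order.TTheory GRing.Theory Num.Theory.
Local Open Scope ring_scope.

Theorem corollary2 (R : realFieldType) (n : nat) (x a b : 'I_n -> R)
  (s t u v : 'I_n) :
  (2 <= n)%N ->
  (forall i, a i <= b i) ->
  (forall i j : 'I_n, (i < j)%N -> x i < x j) ->
  (s < t)%N ->
  (forall i j : 'I_n, (i < j)%N ->
     slope (x s, a s) (x t, b t) <= slope (x i, a i) (x j, b j)) ->
  (u < v)%N ->
  (forall i j : 'I_n, (i < j)%N ->
     slope (x i, b i) (x j, a j) <= slope (x u, b u) (x v, a v)) ->
  (exists l : R * R, stabs_all x a b l) ->
  (stabs_all x a b (line_through (x s, a s) (x t, b t)) /\
   forall l : R * R, stabs_all x a b l -> l.1 <= slope (x s, a s) (x t, b t))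
  /\
  (stabs_all x a b (line_through (x u, b u) (x v, a v)) /\
   forall l : R * R, stabs_all x a b l -> slope (x u, b u) (x v, a v) <= l.1).
Proof.
move=> _ Hab Hx st Hmin uv Hmax [[k c] Hl].
have Hl' : forall i, a i <= k * x i + c <= b i by move=> i; exact: Hl i.
rewrite /line_through /stabs_all /meets_seg /=.
set m := slope _ _. set M := slope (x u, b u) _.
have Hm : forall i j : 'I_n, (i < j)%N -> m * (x j - x i) <= b j - a i.
  by move=> i j ij; have := Hmin i j ij; rewrite /slope /= ler_pdivlMr ?subr_gt0 ?Hx.
have HM : forall i j : 'I_n, (i < j)%N -> a j - b i <= M * (x j - x i).
  by move=> i j ij; have := Hmax i j ij; rewrite /slope /= ler_pdivrMr ?subr_gt0 ?Hx.
have Hmst : m * (x t - x s) = b t - a s.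
  by rewrite /m /slope /= divfK // subr_eq0 gt_eqF ?Hx.
have HMuv : M * (x v - x u) = a v - b u.
  by rewrite /M /slope /= divfK // subr_eq0 gt_eqF ?Hx.
have kmG : forall k c, (forall i, a i <= k * x i + c <= b i) -> k <= m.
  move=> k0 c0 H; have := Hx _ _ st; have /andP[? ?] := H s; have /andP[? ?] := H t.
  rewrite /m /slope /= => xst; rewrite ler_pdivlMr ?subr_gt0 //; nra.
have kMG : forall k c, (forall i, a i <= k * x i + c <= b i) -> M <= k.
  move=> k0 c0 H; have := Hx _ _ uv; have /andP[? ?] := H u; have /andP[? ?] := H v.
  rewrite /M /slope /= => xuv; rewrite ler_pdivrMr ?subr_gt0 //; nra.
have km := kmG _ _ Hl'. have kM := kMG _ _ Hl'.
split; split.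
- move=> i; have /andP[? ?] := Hl' i; have := Hab i => ?; apply/andP; split.
  + case: (ltngtP i t) => [it|ti|/val_inj ->]; last by have := Hab t; have := Hmst; nra.
    * have := Hm _ _ it; have := Hx _ _ it; nra.
    * have /andP[? ?] := Hl' t; have := Hx _ _ ti; nra.
  + case: (ltngtP i s) => [i_s|si|/val_inj ->]; last by have := Hab s; have := Hmst; nra.
    * have /andP[? ?] := Hl' s; have := Hx _ _ i_s; nra.
    * have := Hm _ _ si; have := Hx _ _ si; nra.
- by move=> [k' c'] H; exact: (kmG k' c' H).
- move=> i; have /andP[? ?] := Hl' i; have := Hab i => ?; apply/andP; split.
  + case: (ltngtP i u) => [iu|ui|/val_inj ->]; last by have := Hab u; have := HMuv; nra.
    * have /andP[? ?] := Hl' u; have := Hx _ _ iu; nra.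
    * have := HM _ _ ui; have := Hx _ _ ui; nra.
  + case: (ltngtP i v) => [iv|vi|/val_inj ->]; last by have := Hab v; have := HMuv; nra.
    * have := HM _ _ iv; have := Hx _ _ iv; nra.
    * have /andP[? ?] := Hl' v; have := Hx _ _ vi; nra.
- by move=> [k' c'] H; exact: (kMG k' c' H).
Qed.
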